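(* Let $q=p^e$ with $p$ prime and $e\ge 1$, and fix an integer $s$ with $0\le s<e$. Let $C_1$ and $C_2$ be linear codes over $\mathbb{F}_q$ with parameters $[n,k_1,d_1]_q$ and $[n,k_2,d_2]_q$ respectively, such that $C_2^{\perp_s}\subseteq C_1$. Then there exists a quantum code with parameters $[[n,k_1+k_2-n,d]]_q$, where $$d=\min\{w_H(c)\mid c\in (C_1\setminus (C_2^{p^{e-s}})^{\perp})\cup (C_2^{p^{e-s}}\setminus C_1^{\perp})\}\ \ge\ \min\{d_1,d_2\},$$ and this code is pure to $\min\{d_1,d_2\}$.
   Context: For $\mathbf{x},\mathbf{y}\in\mathbb{F}_q^n$ the $s$-Galois form is $[\mathbf{x},\mathbf{y}]_s=\sum_{i=1}^n x_iy_i^{p^s}$. For a code $C\subseteq\mathbb{F}_q^n$, its $s$-Galois dual is $C^{\perp_s}=\{\mathbf{x}\in\mathbb{F}_q^n: [\mathbf{c},\mathbf{x}]_s=0\ \forall \mathbf{c}\in C\}$; $C^{\perp}=C^{\perp_0}$ is the Euclidean dual. For a vector $\mathbf{a}=(a_1,\dots,a_n)$, $\mathbf{a}^{p^{e-s}}=(a_1^{p^{e-s}},\dots,a_n^{p^{e-s}})$, and $C^{p^{e-s}}=\{\mathbf{a}^{p^{e-s}}:\mathbf{a}\in C\}$. $w_H$ denotes Hamming weight. Quantum codes: let $V_n=(\mathbb{C}^q)^{\otimes n}$ with orthonormal basis $\{|\mathbf{c}\rangle:\mathbf{c}\in\mathbb{F}_q^n\}$. For $a,b\in\mathbb{F}_q$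 define $X(a)|x\rangle=|x+a\rangle$, $Z(b)|x\rangle=\omega^{\mathrm{tr}(bx)}|x\rangle$ with $\omega=e^{2\pi i/p}$ and $\mathrm{tr}:\mathbb{F}_q\to\mathbb{F}_p$ the trace; for $\mathbf{a},\mathbf{b}\in\mathbb{F}_q^n$ let $X(\mathbf{a})=\bigotimes_i X(a_i)$, $Z(\mathbf{b})=\bigotimes_i Z(b_i)$. The error group is $G_n=\{\omega^cX(\mathbf{a})Z(\mathbf{b}):\mathbf{a},\mathbf{b}\in\mathbb{F}_q^n, c\in\mathbb{F}_p\}$, and the weight of $\omega^cX(\mathbf{a})Z(\mathbf{b})$ is the number of $i$ with $(a_i,b_i)\ne(0,0)$. A quantum code with parameters $[[n,k,d]]_q$ is a subspace $Q\subseteq V_n$ of dimension $q^k$ with minimum distance $d$, i.e. for all $|u\rangle,|v\rangle\in Q$ with $\langle u|v\rangle=0$ and every $E\in G_n$ of weight at most $d-1$, $\langle u|E|v\rangle=0$ (and, if $k=0$, as is standard, $d$ is defined via purity: $\langle u|E|u\rangle=\langle u|u\rangle\cdot$const fails only for weight $\ge d$). $Q$ is pure to $t$ if $\langle u|E|v\rangle=0$ for all $|u\rangle,|v\rangle\in Q$ and all $E\in G_n$ of weight between $1$ and $t-1$. *)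

(* Defs.v *)
From HB Require Import structures.
From mathcomp Require Import all_boot all_order all_algebra all_field.
Set Implicit Arguments. Unset Strict Implicit. Unset Printing Implicit Defensive.
Import Order.TTheory GRing.Theory Num.Theory.
Local Open Scope ring_scope.

Definition wH (F : finFieldType) (n : nat) (c : 'rV[F]_n) : nat :=
  #|[set i : 'I_n | c 0 i != 0]|.

Definition is_min_dist (F : finFieldType) (n : nat) (C : {vspace 'rV[F]_n})
  (d : nat) : Prop :=
  (exists c, [/\ c \in C, c != 0 & wH c = d]) /\
  (forall c, c \in C -> c != 0 -> (d <= wH c)%N).

Definition galois_form (F : finFieldType) (n p s : nat) (x y : 'rV[F]_n) : F :=
  \sum_(i < n) x 0 i * (y 0 i) ^+ (p ^ s).

Definition sdual (F : finFieldType) (n p s : nat) (C : {vspace 'rV[F]_n})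
  : pred 'rV[F]_n :=
  [pred x : 'rV[F]_n | [forall c : 'rV[F]_n, (c \in C) ==> (galois_form p s c x == 0)]].

Definition edual (F : finFieldType) (n : nat) (A : pred 'rV[F]_n)
  : pred 'rV[F]_n :=
  [pred x : 'rV[F]_n | [forall c : 'rV[F]_n, (c \in A) ==> (\sum_(i < n) c 0 i * x 0 i == 0)]].

Definition pow_code (F : finFieldType) (n : nat) (C : {vspace 'rV[F]_n}) (m : nat)
  : pred 'rV[F]_n :=
  [pred x : 'rV[F]_n | [exists c : 'rV[F]_n, (c \in C) && (x == map_mx (fun a => a ^+ m) c)]].

Definition is_min_wt (F : finFieldType) (n : nat) (S : pred 'rV[F]_n) (d : nat)
  : Prop :=
  (exists c, c \in S /\ wH c = d) /\ (forall c, c \in S -> (d <= wH c)%N).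

(* absolute trace F_{p^e} -> F_p, as an element of F *)
Definition trF (F : finFieldType) (p e : nat) (x : F) : F :=
  \sum_(i < e) x ^+ (p ^ i).

(* the trace as an integer in {0,..,p-1} *)
Definition trn (F : finFieldType) (p e : nat) (x : F) : nat :=
  find (fun k : nat => (k%:R : F) == trF p e x) (iota 0 p).

(* omega = e^{2 pi i / p} : p.-root (-1) is e^{i pi / p} *)
Definition omega (p : nat) : algC := (p.-root (-1)) ^+ 2.

(* V_n = (C^q)^{tensor n}: coordinates indexed by the basis |x>, x in F^n *)
Definition Vn (F : finFieldType) (n : nat) := 'rV[algC]_#|{: 'rV[F]_n}|.

Definition amp (F : finFieldType) (n : nat) (u : Vn F n) (x : 'rV[F]_n) : algC :=
  u 0 (enum_rank x).

Definition cdot (F : finFieldType) (n : nat) (u v : Vn F n) : algC :=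
  \sum_(x : 'rV[F]_n) (amp u x)^* * amp v x.

(* E = X(a) Z(b) : |x> |-> omega^{tr(b.x)} |x + a> *)
Definition errop (F : finFieldType) (n p e : nat) (a b : 'rV[F]_n) (v : Vn F n)
  : Vn F n :=
  \row_(j < #|{: 'rV[F]_n}|)
     (let y := enum_val j in
      omega p ^+ trn p e (\sum_(i < n) b 0 i * (y - a) 0 i) * amp v (y - a)).

Definition wtE (F : finFieldType) (n : nat) (a b : 'rV[F]_n) : nat :=
  #|[set i : 'I_n | (a 0 i != 0) || (b 0 i != 0)]|.

Definition pure_to (F : finFieldType) (n p e : nat) (Q : {vspace Vn F n}) (t : nat)
  : Prop :=
  forall u v, u \in Q -> v \in Q -> forall a b : 'rV[F]_n,
    (0 < wtE a b)%N -> (wtE a b < t)%N -> cdot u (errop p e a b v) = 0.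

Definition detects (F : finFieldType) (n p e : nat) (Q : {vspace Vn F n}) (d : nat)
  : Prop :=
  forall u v, u \in Q -> v \in Q -> cdot u v = 0 -> forall a b : 'rV[F]_n,
    (wtE a b < d)%N -> cdot u (errop p e a b v) = 0.

(* Q is an [[n,k,d]]_q quantum code (q = #|F|); for k = 0, d via purity *)
Definition qcode (F : finFieldType) (n p e : nat) (Q : {vspace Vn F n}) (k d : nat)
  : Prop :=
  \dim Q = (#|F| ^ k)%N /\
  (if k == 0%N then pure_to p e Q d else detects p e Q d).

(* Main.v *)
Require Import Defs.
From HB Require Import structures.
From mathcomp Require Import all_boot all_order all_algebra all_field.
From mathcomp Require Import ring.
Import Order.TTheory GRing.Theory Num.Theory.
Local Open Scope ring_scope.
Set Implicit Arguments. Unset Strict Implicit.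

Section Trace.
Variables (F : finFieldType) (p e : nat).
Hypotheses (pr : prime p) (e0 : (0 < e)%N) (cardF : #|F| = (p ^ e)%N).

Lemma chF : p \in [pchar F].
Proof. exact: card_finPcharP cardF pr. Qed.

Lemma frobD k (x y : F) : (x + y) ^+ (p ^ k) = x ^+ (p ^ k) + y ^+ (p ^ k).
Proof.
apply: exprDn_pchar.
by rewrite (eq_pnat _ (pcharf_eq chF)) pnatX pnat_id.
Qed.

Lemma frob0 k : (0 : F) ^+ (p ^ k) = 0.
Proof. by rewrite expr0n eqn0Ngt expn_gt0 prime_gt0. Qed.

Lemma frob_sum k (I : finType) (f : I -> F) :
  (\sum_i f i) ^+ (p ^ k) = \sum_i f i ^+ (p ^ k).
Proof. exact: (big_morph _ (frobD k) (frob0 k)). Qed.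

Lemma frobN k (x : F) : (- x) ^+ (p ^ k) = - x ^+ (p ^ k).
Proof. by apply/eqP; rewrite -addr_eq0 -frobD addNr frob0. Qed.

Lemma frob_card (x : F) : x ^+ (p ^ e) = x.
Proof. by rewrite -cardF expf_card. Qed.

Lemma trFD (x y : F) : trF p e (x + y) = trF p e x + trF p e y.
Proof. by rewrite /trF -big_split; apply: eq_bigr => i _; exact: frobD. Qed.

Lemma trF_frob (x : F) : trF p e x ^+ p = trF p e x.
Proof.
rewrite /trF; transitivity ((\sum_(i < e) x ^+ (p ^ i)) ^+ (p ^ 1)); first by rewrite expn1.
rewrite frob_sum.
have He : e = e.-1.+1 by rewrite prednK.
rewrite He big_ord_recr big_ord_recl /= addrC; congr (_ + _).
  by rewrite -exprM -expnSr -He frob_card expn0 expr1.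
by apply: eq_bigr => i _; rewrite -exprM -expnSr.
Qed.

Lemma natf_p : (p%:R : F) = 0.
Proof. exact: pcharf0 chF. Qed.

Lemma natf_mod m : (m%:R : F) = (m %% p)%:R.
Proof. by rewrite {1}(divn_eq m p) natrD natrM natf_p mulr0 add0r. Qed.

Lemma natf_inj a b : (a < p)%N -> (b < p)%N -> (a%:R : F) = b%:R -> a = b.
Proof.
wlog ab : a b / (a <= b)%N.
  move=> H ha hb eab; case: (leqP a b) => [l|l]; first exact: H.
  by apply/esym/H => //; apply: ltnW.
move=> ha hb eab; apply/eqP; rewrite eqn_leq ab /=.
have : (p %| b - a)%N by rewrite (dvdn_pcharf chF) natrB // eab subrr.
case: (posnP (b - a)) => [/eqP|]; first by rewrite subn_eq0.
move=> h /(dvdn_leq h) => hp; have : (b - a < p)%N by apply: leq_ltn_trans hb; apply: leq_subr.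
by rewrite ltnNge hp.
Qed.

Lemma frob_nat k : (k%:R : F) ^+ p = k%:R.
Proof.
elim: k => [|k IH]; first by rewrite expr0n eqn0Ngt prime_gt0.
by rewrite -addn1 natrD -{1}(expn1 p) frobD expn1 IH expr1n.
Qed.

Lemma Fp_nat (c : F) : c ^+ p = c -> exists2 k, (k < p)%N & k%:R = c.
Proof.
move=> hc; case: (boolP [exists k : 'I_p, k%:R == c]) => [/existsP[k /eqP hk]|hn].
  by exists k.
exfalso.
pose P : {poly F} := 'X^p - 'X.
have p1 : (p == 1%N) = false by rewrite gtn_eqF // prime_gt1.
have Pnz : P != 0.
  apply/eqP => h; have := congr1 (fun q : {poly F} => q`_p) h.
  by rewrite coefB coefXn coefX eqxx p1 subr0 coef0; apply/eqP; rewrite oner_eq0.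
pose rs := c :: [seq (k%:R : F) | k <- iota 0 p].
have := @max_poly_roots _ P rs Pnz.
have -> : all (root P) rs.
  rewrite /= rootE !hornerE hc subrr eqxx /=.
  by apply/allP => y /mapP[k _ ->]; rewrite rootE !hornerE frob_nat subrr.
have -> : uniq rs.
  rewrite /= map_inj_in_uniq ?iota_uniq ?andbT.
    apply/mapP => [[k]]; rewrite mem_iota add0n => /andP[_ kp] ck.
    by move/existsP: hn; apply; exists (Ordinal kp); rewrite ck.
  by move=> a b; rewrite !mem_iota !add0n => /andP[_ ap] /andP[_ bp]; apply: natf_inj.
move=> /(_ isT isT); rewrite /= size_map size_iota.
have : (size P <= p.+1)%N.
  apply: leq_trans (size_polyD _ _) _.
  by rewrite size_polyN size_polyX size_polyXn geq_max leqnn ltnS prime_gt0.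
by move=> h1 h2; have := leq_trans h2 h1; rewrite ltnn.
Qed.

Lemma trn_spec (x : F) : (trn p e x < p)%N /\ (trn p e x)%:R = trF p e x.
Proof.
have [k kp hk] := Fp_nat (trF_frob x).
have hh : has (fun k : nat => (k%:R : F) == trF p e x) (iota 0 p).
  by apply/hasP; exists k; rewrite ?mem_iota ?hk //.
have := hh; rewrite has_find size_iota => hf; split => //.
have := nth_find 0%N hh; rewrite nth_iota // add0n => /eqP.
by rewrite /trn.
Qed.

Lemma trn_eq (x : F) k : (k < p)%N -> k%:R = trF p e x -> trn p e x = k.
Proof.
move=> kp hk; have [h1 h2] := trn_spec x.
by apply: natf_inj => //; rewrite h2 hk.
Qed.

Lemma trn_addmod (x y : F) : trn p e (x + y) = ((trn p e x + trn p e y) %% p)%N.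
Proof.
apply: trn_eq; first by rewrite ltn_pmod // prime_gt0.
by rewrite -natf_mod natrD (proj2 (trn_spec x)) (proj2 (trn_spec y)) trFD.
Qed.

Lemma trF_ex : exists x : F, trF p e x != 0.
Proof.
case: (boolP [exists x : F, trF p e x != 0]) => [/existsP[x hx]|hn]; first by exists x.
exfalso.
pose P : {poly F} := \sum_(i < e) 'X^(p ^ i).
have hP x : P.[x] = trF p e x by rewrite horner_sum; apply: eq_bigr => i _; rewrite hornerXn.
have p1 := prime_gt1 pr.
have Pnz : P != 0.
  apply/eqP => h; have := congr1 (fun q : {poly F} => q`_1) h.
  rewrite coef_sum coef0 (bigD1 (Ordinal e0)) //= big1 ?addr0.
    by rewrite coefXn expn0 eqxx; apply/eqP; rewrite oner_eq0.
  move=> i /negPf hi; rewrite coefXn.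
  have -> : (1 == p ^ i)%N = false.
    rewrite -(expn0 p) (inj_eq (expnI p1)).
    by apply/negP => /eqP h0; move: hi; rewrite -val_eqE /= -h0 eqxx.
  by [].
have := @max_poly_roots _ P (enum F) Pnz.
have -> : all (root P) (enum F).
  apply/allP => x _; rewrite rootE hP.
  by apply/negPn; move/existsPn: hn; apply.
rewrite enum_uniq -cardE cardF => /(_ isT isT).
have : (size P <= (p ^ e.-1).+1)%N.
  apply: leq_trans (size_sum _ _ _) _.
  apply/bigmax_leqP => i _; rewrite size_polyXn ltnS leq_exp2l //.
  by rewrite -ltnS prednK.
have : ((p ^ e.-1).+1 <= p ^ e)%N.
  rewrite -{2}(prednK e0) expnS.
  have hp : (0 < p ^ e.-1)%N by rewrite expn_gt0 prime_gt0.
  apply: leq_trans (_ : (p ^ e.-1 + p ^ e.-1 <= _)%N).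
    by rewrite -addn1 leq_add2l.
  by rewrite addnn -mul2n leq_mul2r p1 orbT.
move=> h1 h2 h3; have := leq_trans h3 (leq_trans h2 h1).
by rewrite ltnn.
Qed.

Lemma frob_iter (c : F) k : c ^+ p = c -> c ^+ (p ^ k) = c.
Proof.
move=> hc; elim: k => [|k IH]; first by rewrite expn0 expr1.
by rewrite expnSr exprM IH hc.
Qed.

Lemma trF_one : exists x : F, trF p e x = 1.
Proof.
have [x0 hx0] := trF_ex.
set c := trF p e x0 in hx0.
have hc : c ^+ p = c by exact: trF_frob.
exists (c^-1 * x0).
rewrite /trF; under eq_bigr => i _ do rewrite exprMn exprVn frob_iter //.
by rewrite -mulr_sumr mulVf.
Qed.

Lemma om_p : omega p ^+ p = 1.
Proof.
by rewrite /omega exprAC rootCK ?prime_gt0 // sqrrN expr1n.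
Qed.

Lemma om_neq1 : omega p != 1.
Proof.
rewrite /omega sqrf_eq1; set r := p.-root (-1).
have p0 := prime_gt0 pr.
have rp : r ^+ p = -1 by rewrite /r rootCK.
have two : (1 : algC) != -1.
  apply/eqP => h; have := congr1 (fun z => z + 1) h; rewrite addNr => /eqP.
  by rewrite -(natrD algC 1 1) pnatr_eq0.
apply/norP; split.
  by apply/eqP => r1; move: rp; rewrite r1 expr1n; apply/eqP.
apply/eqP => rN.
have [w pw] := C_prim_root_exists p0.
have w1 : w ^+ p = 1 by apply: prim_expr_order.
have wn1 : w != 1.
  apply/eqP => h; have := prim_order_dvd pw 1; rewrite expr1 h eqxx.
  by rewrite dvdn1 (gtn_eqF (prime_gt1 pr)).
have [v [v1 vn1 vIm]] : exists v : algC, [/\ v ^+ p = 1, v != 1 & 'Im v <= 0].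
  case/orP: (real_leVge (Creal_Im w) (rpred0 _)) => h; first by exists w.
  exists w^*; split; first by by rewrite -rmorphXn w1 rmorph1.
    by apply: contra wn1 => /eqP h1; rewrite -(conjCK w) h1 conjC1.
  by rewrite Im_conj oppr_le0.
have m1p : (-1 : algC) ^+ p = -1 by move: rp; rewrite rN.
have := @rootC_Re_max _ p (-1) (- v) p0.
rewrite exprNn v1 mulr1 m1p => /(_ erefl).
rewrite raddfN /= oppr_ge0 => /(_ vIm).
rewrite -/r rN raddfN /= => hRe.
rewrite raddfN /= (Creal_ReP _ (rpred1 _)) lerN2 in hRe.
have nv : `|v| = 1.
  by apply/eqP; rewrite -(pexpr_eq1 p0) ?normr_ge0 // -normrX v1 normr1.
have e1 : 'Re v == `|v| by rewrite eq_le (leif_Re_Creal v).1 nv hRe.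
rewrite (leif_Re_Creal v).2 in e1.
by move: vn1; rewrite -(ger0_norm e1) nv eqxx.
Qed.

Section Perp.
Variables (n : nat).

Lemma Lcard m (K : 'M[F]_(m, n)) :
  #|[set x : 'rV[F]_n | (x <= K)%MS]| = (#|F| ^ \rank K)%N.
Proof.
rewrite -[in RHS](mul1n (\rank K)) -card_mx.
rewrite -(card_imset _ (row_free_inj (row_base_free K))).
apply: eq_card => x; rewrite inE; apply/idP/imsetP.
  by rewrite -(eq_row_base K) => /submxP[D ->]; exists D.
by case=> D _ ->; rewrite -(eq_row_base K) submxMl.
Qed.

Variable U : {vspace 'rV[F]_n}.
Let A : 'M[F]_(\dim U, n) := \matrix_(i < \dim U) (vbasis U)`_i.

Lemma bmx_free : row_free A.
Proof.
apply: inj_row_free => v hv; apply/rowP => i; rewrite mxE.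
move: (basis_free (vbasisP U)) => /freeP /(_ (fun j => v 0 j)); apply.
rewrite mulmx_sum_row in hv; rewrite -[RHS]hv; apply: eq_bigr => j _; by rewrite rowK.
Qed.

Lemma mem_bmx x : (x \in U) = (x <= A)%MS.
Proof.
apply/idP/idP.
  move/coord_vbasis => ->.
  have -> : \sum_(i < \dim U) coord (vbasis U) i x *: (vbasis U)`_i
            = (\row_i coord (vbasis U) i x) *m A.
    by rewrite mulmx_sum_row; apply: eq_bigr => i _; rewrite rowK mxE.
  exact: submxMl.
case/submxP => D ->; rewrite mulmx_sum_row.
by apply: rpred_sum => i _; rewrite rpredZ // rowK vbasis_mem // memt_nth.
Qed.

Lemma dotE (c x : 'rV[F]_n) : \sum_j c 0 j * x 0 j = (c *m x^T) 0 0.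
Proof. by rewrite !mxE; apply: eq_bigr => j _; rewrite mxE. Qed.

Lemma edual_ker x : (x \in edual (fun c => c \in U)) = (x <= kermx A^T)%MS.
Proof.
rewrite sub_kermx inE; apply/forallP/eqP.
  move=> h; apply/rowP => i; rewrite !mxE.
  have := h ((vbasis U)`_i); rewrite vbasis_mem ?memt_nth //= => /eqP h'; rewrite -[RHS]h'.
  by apply: eq_bigr => j _; rewrite !mxE mulrC.
move=> h c; apply/implyP; rewrite mem_bmx => /submxP[D ->].
have h2 : A *m x^T = 0 by rewrite -(trmxK (A *m x^T)) trmx_mul trmxK h trmx0.
by rewrite dotE -mulmxA h2 mulmx0 mxE.
Qed.

Lemma rankA : \rank A = \dim U.
Proof. exact/eqP/bmx_free. Qed.

Lemma card_edual :
  #|[set x | x \in edual (fun c => c \in U)]| = (#|F| ^ (n - \dim U))%N.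
Proof.
rewrite -rankA -mxrank_tr -mxrank_ker -Lcard.
by apply: eq_card => x; rewrite !in_set edual_ker.
Qed.

Lemma dual_dual (x : 'rV[F]_n) :
  (forall y, y \in edual (fun c => c \in U) -> \sum_i y 0 i * x 0 i = 0) ->
  x \in U.
Proof.
move=> h; set K := kermx A^T.
have hx : (x <= kermx K^T)%MS.
  rewrite sub_kermx; apply/eqP/rowP => i; rewrite !mxE.
  have := h (row i K); rewrite edual_ker row_sub => /(_ isT) h'; rewrite -[RHS]h'.
  by apply: eq_bigr => j _; rewrite !mxE mulrC.
have hA : (A <= kermx K^T)%MS.
  by rewrite sub_kermx -(trmxK A) -trmx_mul mulmx_ker trmx0.
have hr : \rank A = \rank (kermx K^T).
  rewrite mxrank_ker mxrank_tr mxrank_ker mxrank_tr subKn //.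
  exact: rank_leq_col.
have := (mxrank_leqif_eq hA).2; rewrite hr eqxx => /esym /andP[_ hB].
by rewrite mem_bmx (submx_trans hx hB).
Qed.

End Perp.

Section Main.
Variables (s n : nat) (C1 C2 : {vspace 'rV[F]_n}).
Hypothesis se : (s < e)%N.
Hypothesis hsub : forall x, x \in sdual p s C2 -> x \in C1.

Definition fr k (x : 'rV[F]_n) : 'rV[F]_n := map_mx (fun a => a ^+ (p ^ k)) x.
Local Notation sig := (fr s).
Local Notation tau := (fr (e - s)).
Local Notation W := (sdual p s C2).
Local Notation D := (pow_code C2 (p ^ (e - s))).

Lemma frKa (a : F) : (a ^+ (p ^ (e - s))) ^+ (p ^ s) = a.
Proof. by rewrite -exprM -expnD subnK ?frob_card // ltnW. Qed.
Lemma frKb (a : F) : (a ^+ (p ^ s)) ^+ (p ^ (e - s)) = a.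
Proof. by rewrite -exprM -expnD addnC subnK ?frob_card // ltnW. Qed.

Lemma sig_tau x : sig (tau x) = x.
Proof. by apply/rowP => i; rewrite !mxE frKa. Qed.
Lemma tau_sig x : tau (sig x) = x.
Proof. by apply/rowP => i; rewrite !mxE frKb. Qed.

Lemma fr_dot k (c x : 'rV[F]_n) :
  (\sum_i c 0 i * x 0 i) ^+ (p ^ k) = \sum_i fr k c 0 i * fr k x 0 i.
Proof. by rewrite frob_sum; apply: eq_bigr => i _; rewrite !mxE exprMn. Qed.

Lemma frL k (a : F) x y : fr k (a *: x + y) = a ^+ (p ^ k) *: fr k x + fr k y.
Proof. by apply/rowP => i; rewrite !mxE frobD exprMn. Qed.

Lemma fr0 k : fr k 0 = 0.
Proof. by apply/rowP => i; rewrite !mxE frob0. Qed.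

Lemma frpow_eq0 k (a : F) : (a ^+ (p ^ k) == 0) = (a == 0).
Proof. by rewrite expf_eq0 expn_gt0 prime_gt0. Qed.

Lemma memW x : (x \in W) = (sig x \in edual (fun c => c \in C2)).
Proof.
rewrite !inE; apply: eq_forallb => c; congr (_ ==> (_ == 0)).
by apply: eq_bigr => i _; rewrite mxE.
Qed.

Lemma edual_lin (U : {vspace 'rV[F]_n}) a x y :
  x \in edual (fun c => c \in U) -> y \in edual (fun c => c \in U) ->
  a *: x + y \in edual (fun c => c \in U).
Proof. by rewrite !edual_ker => hx hy; rewrite addmx_sub // scalemx_sub. Qed.

Lemma edual0 (U : {vspace 'rV[F]_n}) : 0 \in edual (fun c => c \in U).
Proof. by rewrite edual_ker sub0mx. Qed.

Lemma W0 : 0 \in W.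
Proof. by rewrite memW fr0 edual0. Qed.

Lemma WL a x y : x \in W -> y \in W -> a *: x + y \in W.
Proof. by rewrite !memW frL; apply: edual_lin. Qed.

Lemma WD x y : x \in W -> y \in W -> x + y \in W.
Proof. by move=> hx hy; rewrite -[x]scale1r WL. Qed.

Lemma WZ a x : x \in W -> a *: x \in W.
Proof. by move=> hx; rewrite -[_ *: _]addr0 WL ?W0. Qed.

Lemma WN x : x \in W -> - x \in W.
Proof. by move=> hx; rewrite -scaleN1r WZ. Qed.

Lemma memD x : (x \in D) = [exists c, (c \in C2) && (x == tau c)].
Proof. by []. Qed.

Lemma gal_tau (c x : 'rV[F]_n) :
  (\sum_i tau c 0 i * x 0 i) ^+ (p ^ s) = galois_form p s c x.
Proof. by rewrite fr_dot sig_tau; apply: eq_bigr => i _; rewrite [fr s x 0 i]mxE. Qed.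

Lemma edualD x : (x \in edual D) = (x \in W).
Proof.
rewrite !inE; apply/forallP/forallP => h c; apply/implyP.
  move=> hc; have := h (tau c); rewrite memD.
  have -> : [exists c0, (c0 \in C2) && (tau c == tau c0)].
    by apply/existsP; exists c; rewrite hc eqxx.
  by move=> /= /eqP h1; rewrite -gal_tau h1 frob0.
rewrite memD => /existsP[c0 /andP[hc0 /eqP ->]].
have := h c0; rewrite hc0 /= => h1.
by rewrite -(frpow_eq0 s) gal_tau.
Qed.


Lemma card_W : #|[set x | x \in W]| = (#|F| ^ (n - \dim C2))%N.
Proof.
rewrite -card_edual -[RHS](card_preimset _ (can_inj tau_sig)).
by apply: eq_card => x; rewrite in_set memW; rewrite [RHS]inE [RHS]in_set.
Qed.

Definition Wv : {vspace 'rV[F]_n} := <<enum [set x : 'rV[F]_n | x \in W]>>%VS.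

Lemma memWv x : (x \in Wv) = (x \in W).
Proof.
apply/idP/idP.
  move=> hx; rewrite (@coord_span _ _ _ (in_tuple _) x hx).
  apply: (big_ind (fun y => y \in W)) => [|y z|i _]; [exact: W0 | exact: WD |].
  apply: WZ; have := mem_nth 0 (ltn_ord i).
  by rewrite mem_enum in_set.
by move=> hx; apply: memv_span; rewrite mem_enum in_set.
Qed.

Lemma dim_Wv : \dim Wv = (n - \dim C2)%N.
Proof.
apply: (expnI (finNzRing_gt1 F)); rewrite -card_vspace -card_W.
by apply: eq_card => x; rewrite memWv in_set.
Qed.

Lemma Wv_C1 : (Wv <= C1)%VS.
Proof. by apply/subvP => x; rewrite memWv; exact: hsub. Qed.

Definition Uc : {vspace 'rV[F]_n} := (C1 :\: Wv)%VS.

Lemma dim_Uc : \dim Uc = (\dim C1 - (n - \dim C2))%N.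
Proof.
have := dimv_cap_compl C1 Wv; rewrite (capv_idPr Wv_C1) dim_Wv => <-.
by rewrite addKn.
Qed.

Lemma Uc_C1 x : x \in Uc -> x \in C1.
Proof. by apply/subvP/diffvSl. Qed.

Lemma Uc_W x : x \in Uc -> x \in W -> x = 0.
Proof.
move=> hu hw; apply/eqP; rewrite -memv0 -(capv_diff C1 Wv) memv_cap hu.
by rewrite memWv.
Qed.

Definition phi (x : 'rV[F]_n) : Vn F n :=
  \row_j (((enum_val j - x) \in W)%:R : algC).

Lemma amp_phi x y : amp (phi x) y = (((y - x) \in W)%:R : algC).
Proof. by rewrite /amp mxE enum_rankK. Qed.

Lemma ampZ a (u : Vn F n) y : amp (a *: u) y = a * amp u y.
Proof. by rewrite /amp mxE. Qed.

Lemma amp_sum (I : finType) (f : I -> Vn F n) y :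
  amp (\sum_i f i) y = \sum_i amp (f i) y.
Proof. by rewrite /amp summxE. Qed.

Lemma amp0 y : amp (0 : Vn F n) y = 0.
Proof. by rewrite /amp mxE. Qed.

Definition good (v : Vn F n) :=
  (forall y, y \notin C1 -> amp v y = 0) /\
  (forall y w, w \in W -> amp v (y + w) = amp v y).

Lemma WDl x w : w \in W -> (x + w \in W) = (x \in W).
Proof.
move=> hw; apply/idP/idP => h; last exact: WD.
by rewrite -(addrK w x); apply: WD => //; apply: WN.
Qed.

Lemma good_phi u : u \in C1 -> good (phi u).
Proof.
move=> hu; split => [y hy|y w hw]; rewrite !amp_phi.
  case: (boolP (y - u \in W)) => // h; exfalso; move/negP: hy; apply.
  by rewrite -(subrK u y) memvD // hsub.
by rewrite (addrAC y w (- u)) (WDl (y - u) hw).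
Qed.

Definition rs := enum Uc.

Definition Q : {vspace Vn F n} := <<map phi rs>>%VS.

Lemma amp_Q v y : v \in Q ->
  amp v y = \sum_(i < size (map phi rs))
     coord (in_tuple (map phi rs)) i v * amp (phi (nth 0 rs i)) y.
Proof.
move=> hv; rewrite {1}(@coord_span _ _ _ (in_tuple _) v hv) amp_sum.
apply: eq_bigr => i _; rewrite ampZ (nth_map 0) //.
by rewrite -(size_map phi); exact: ltn_ord.
Qed.

Lemma rs_Uc i : (i < size rs)%N -> nth 0 rs i \in Uc.
Proof. by move=> hi; have := mem_nth 0 hi; rewrite mem_enum. Qed.

Lemma goodQ v : v \in Q -> good v.
Proof.
move=> hv; split => [y hy|y w hw]; rewrite !(amp_Q _ hv).
  apply: big1 => i _; rewrite (proj1 (good_phi _)) ?mulr0 //.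
  by apply: Uc_C1; apply: rs_Uc; rewrite -(size_map phi).
apply: eq_bigr => i _; rewrite (proj2 (good_phi _)) //.
by apply: Uc_C1; apply: rs_Uc; rewrite -(size_map phi).
Qed.

Lemma free_phis : free (map phi rs).
Proof.
apply/(@freeP _ _ _ (in_tuple (map phi rs))) => k hk i.
have hi : (i < size rs)%N by rewrite -(size_map phi).
have := congr1 (fun v => amp v (nth 0 rs i)) hk; rewrite amp_sum amp0 /=.
rewrite (bigD1 i) //= big1 ?addr0.
  by rewrite ampZ (nth_map 0) // amp_phi subrr W0 mulr1.
move=> j hj; rewrite ampZ (nth_map 0) ?amp_phi; last by rewrite -(size_map phi).
case: (boolP (_ \in W)) => h; last by rewrite mulr0.
have hj' : (j < size rs)%N by rewrite -(size_map phi).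
have := Uc_W (memvB (rs_Uc hi) (rs_Uc hj')) h.
move/eqP; rewrite subr_eq0 nth_uniq ?enum_uniq // => /eqP hij.
by move: hj; rewrite -val_eqE /= hij eqxx.
Qed.

Lemma dimQ : \dim Q = (#|F| ^ \dim Uc)%N.
Proof.
by move: free_phis; rewrite /free => /eqP ->; rewrite size_map -cardE card_vspace.
Qed.

Lemma amp_err (a b : 'rV[F]_n) (v : Vn F n) y :
  amp (errop p e a b v) y =
  omega p ^+ trn p e (\sum_i b 0 i * (y - a) 0 i) * amp v (y - a).
Proof. by rewrite /amp /errop mxE enum_rankK. Qed.

Lemma Z1 (u v : Vn F n) (a b : 'rV[F]_n) : good u -> good v -> a \notin C1 ->
  cdot u (errop p e a b v) = 0.
Proof.
move=> [u1 _] [v1 _] ha; apply: big1 => y _; rewrite amp_err.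
case: (boolP (y \in C1)) => hy; last by rewrite u1 // conjC0 mul0r.
rewrite (v1 (y - a)) ?mulr0 //; apply: contra ha => h.
have -> : a = y - (y - a) by rewrite opprB addrC subrK.
exact: memvB.
Qed.

Lemma om_trD (x y : F) :
  omega p ^+ trn p e (x + y) = omega p ^+ trn p e x * omega p ^+ trn p e y.
Proof. by rewrite trn_addmod (expr_mod _ om_p) exprD. Qed.

Lemma dotD (b x y : 'rV[F]_n) :
  \sum_i b 0 i * (x + y) 0 i = \sum_i b 0 i * x 0 i + \sum_i b 0 i * y 0 i.
Proof. by rewrite -big_split; apply: eq_bigr => i _; rewrite mxE mulrDr. Qed.

Lemma rearr (A B C w : algC) : A * (B * w * C) = w * (A * (B * C)).
Proof. ring. Qed.

Lemma Z2 (u v : Vn F n) (a b z1 : 'rV[F]_n) : good u -> good v -> z1 \in W ->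
  trn p e (\sum_i b 0 i * z1 0 i) = 1%N ->
  cdot u (errop p e a b v) = 0.
Proof.
move=> [_ u2] [_ v2] hz ht.
set S := cdot u _.
have hS : S = omega p * S.
  rewrite {1}/S /cdot (reindex_inj (addIr z1)) /= mulr_sumr; apply: eq_bigr => y _.
  rewrite !amp_err (u2 y z1 hz) (addrAC y z1 (- a)) (v2 (y - a) z1 hz) (dotD b (y - a) z1).
  rewrite om_trD ht expr1.
  by rewrite rearr.
have : (1 - omega p) * S = 0 by rewrite mulrBl mul1r -hS subrr.
move/eqP; rewrite mulf_eq0 subr_eq0 eq_sym (negbTE om_neq1) /=.
by move/eqP.
Qed.

Lemma trF0 : trF p e (0 : F) = 0.
Proof. by rewrite /trF big1 // => i _; rewrite frob0. Qed.

Lemma trn0 : trn p e (0 : F) = 0%N.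
Proof. by apply: trn_eq; [rewrite prime_gt0 | rewrite trF0]. Qed.

Lemma Eid (u v : Vn F n) (a b : 'rV[F]_n) : good v -> a \in W ->
  b \in edual (fun c => c \in C1) ->
  cdot u (errop p e a b v) = cdot u v.
Proof.
move=> [v1 v2] ha hb; apply: eq_bigr => y _; congr (_ * _); rewrite amp_err.
case: (boolP (y - a \in C1)) => hy.
  have -> : \sum_i b 0 i * (y - a) 0 i = 0.
    move: hb; rewrite inE => /forallP /(_ (y - a)); rewrite hy /= => /eqP h.
    by rewrite -[RHS]h; apply: eq_bigr => i _; rewrite mulrC.
  by rewrite trn0 expr0 mul1r (v2 y (- a) (WN ha)).
rewrite (v1 _ hy) mulr0 v1 //; apply: contra hy => h.
by rewrite memvB // hsub.
Qed.

Lemma get_z1 (b : 'rV[F]_n) : b \notin D ->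
  exists2 z1, z1 \in W & trn p e (\sum_i b 0 i * z1 0 i) = 1%N.
Proof.
move=> hb.
have [z0 hz0 ht] : exists2 z0, z0 \in W & \sum_i b 0 i * z0 0 i != 0.
  case: (boolP [exists z, (z \in W) && (\sum_i b 0 i * z 0 i != 0)]).
    by move=> /existsP[z /andP[h1 h2]]; exists z.
  move=> hn; exfalso; move/negP: hb; apply; rewrite memD; apply/existsP.
  exists (sig b); rewrite tau_sig eqxx andbT.
  apply: dual_dual => y hy.
  have hz : tau y \in W by rewrite memW sig_tau.
  move/existsPn: hn => /(_ (tau y)); rewrite hz /= negbK => /eqP h0.
  have := congr1 (fun t => t ^+ (p ^ s)) h0; rewrite /= fr_dot frob0 sig_tau => h1.
  by rewrite -[RHS]h1; apply: eq_bigr => i _; rewrite mulrC.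
have [x1 hx1] := trF_one.
set t := \sum_i b 0 i * z0 0 i in ht.
exists ((x1 / t) *: z0); first by apply: WZ.
apply: trn_eq; first by rewrite prime_gt1.
have -> : \sum_i b 0 i * ((x1 / t) *: z0) 0 i = x1 / t * t.
  by rewrite mulr_sumr; apply: eq_bigr => i _; rewrite mxE mulrCA.
by rewrite divfK // hx1.
Qed.

Lemma wH_le_wtE (a b : 'rV[F]_n) : (wH a <= wtE a b)%N.
Proof. by apply: subset_leq_card; apply/subsetP => i; rewrite !inE => ->. Qed.

Lemma wH_le_wtE' (a b : 'rV[F]_n) : (wH b <= wtE a b)%N.
Proof. by apply: subset_leq_card; apply/subsetP => i; rewrite !inE orbC => ->. Qed.

Lemma wtE00 : wtE (0 : 'rV[F]_n) 0 = 0%N.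
Proof.
apply/eqP; rewrite cards_eq0; apply/eqP/setP => i.
by rewrite !inE !mxE eqxx.
Qed.

Lemma wH_tau (c : 'rV[F]_n) : wH (tau c) = wH c.
Proof. by apply: eq_card => i; rewrite !inE mxE frpow_eq0. Qed.

Lemma main_res (k1 k2 d1 d2 : nat) :
  \dim C1 = k1 -> is_min_dist C1 d1 ->
  \dim C2 = k2 -> is_min_dist C2 d2 ->
  let S : pred 'rV[F]_n :=
    [pred c | ((c \in C1) && (c \notin edual D)) ||
              ((c \in D) && (c \notin edual (fun x => x \in C1)))] in
  exists Q : {vspace Vn F n},
    (forall d, is_min_wt S d -> qcode p e Q (k1 + k2 - n) d) /\
    (\dim Q = (#|F| ^ (k1 + k2 - n))%N) /\
    (forall d, is_min_wt S d -> (minn d1 d2 <= d)%N) /\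
    pure_to p e Q (minn d1 d2).
Proof.
move=> hk1 [_ md1] hk2 [_ md2] S.
have k2n : (k2 <= n)%N.
  rewrite -hk2; apply: leq_trans (dimvS (subvf C2)) _.
  by rewrite dimvf (dim_matrix F 1 n) mul1r.
have kk : (n - k2 <= k1)%N by rewrite -hk1 -hk2 -dim_Wv; apply: dimvS Wv_C1.
have dimQ' : \dim Q = (#|F| ^ (k1 + k2 - n))%N.
  by rewrite dimQ dim_Uc hk1 hk2 subnBA.
have inS c : (c \in S) = ((c \in C1) && (c \notin edual D)) ||
              ((c \in D) && (c \notin edual (fun x => x \in C1))) by [].
exists Q; split; last split; last split.
- move=> d [[c [hcS hcw]] hmin]; split => //.
  case: ifP => hk0.
    exfalso.
    have hC1W x : x \in C1 -> x \in W.
      have : \dim Wv = \dim C1.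
        rewrite dim_Wv hk1 hk2; apply/eqP; rewrite eqn_leq kk /=.
        move/eqP: hk0; rewrite -subnBA // => /eqP; rewrite subn_eq0 => ->.
        done.
      move/eqP; rewrite (dimv_leqif_eq Wv_C1).2 => /eqP <-.
      by rewrite memWv.
    move: hcS; rewrite inS => /orP[/andP[h1 h2]|/andP[h1 h2]].
      by move: h2; rewrite edualD hC1W.
    move/negP: h2; apply; rewrite inE; apply/forallP => x; apply/implyP => hx.
    have := hC1W x hx; rewrite -edualD inE => /forallP /(_ c); rewrite h1 /= => /eqP h.
    by apply/eqP; rewrite -[RHS]h; apply: eq_bigr => i _; rewrite mulrC.
  move=> u v hu hv huv a b hw.
  have gu := goodQ hu; have gv := goodQ hv.
  case: (boolP (a \in C1)) => ha; last exact: Z1.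
  case: (boolP (b \in D)) => hb; last first.
    by have [z1 hz1 ht] := get_z1 hb; exact: Z2 gu gv hz1 ht.
  have haW : a \in W.
    apply/negPn/negP => haW.
    have : a \in S by rewrite inS ha /= edualD haW.
    move/hmin => h; have := leq_trans h (wH_le_wtE a b).
    by rewrite leqNgt hw.
  have hbC : b \in edual (fun x => x \in C1).
    apply/negPn/negP => hbC.
    have : b \in S by rewrite inS hb hbC orbT.
    move/hmin => h; have := leq_trans h (wH_le_wtE' a b).
    by rewrite leqNgt hw.
  by rewrite Eid.
- exact: dimQ'.
- move=> d [[c [hcS <-]] _].
  move: hcS; rewrite inS => /orP[/andP[h1 h2]|/andP[h1 h2]].
    have cn0 : c != 0 by apply: contra h2 => /eqP ->; rewrite edualD W0.
    exact: leq_trans (geq_minl _ _) (md1 c h1 cn0).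
  have cn0 : c != 0 by apply: contra h2 => /eqP ->; exact: edual0.
  move: h1; rewrite memD => /existsP[c' /andP[hc' /eqP hcc]].
  have c'n0 : c' != 0 by apply: contra cn0 => /eqP h; rewrite hcc h fr0.
  by rewrite hcc wH_tau; exact: leq_trans (geq_minr _ _) (md2 c' hc' c'n0).
- move=> u v hu hv a b hpos hlt.
  have gu := goodQ hu; have gv := goodQ hv.
  case: (boolP (a \in C1)) => ha; last exact: Z1.
  have a0 : a = 0.
    apply/eqP/negPn/negP => an0.
    have := leq_trans (md1 a ha an0) (wH_le_wtE a b).
    by rewrite leqNgt (leq_trans hlt (geq_minl _ _)).
  case: (boolP (b \in D)) => hb; last first.
    by have [z1 hz1 ht] := get_z1 hb; exact: Z2 gu gv hz1 ht.
  exfalso.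
  move: hb; rewrite memD => /existsP[c' /andP[hc' /eqP hcc]].
  case: (eqVneq c' 0) => [c'0|c'n0].
    by move: hpos; rewrite a0 hcc c'0 fr0 wtE00.
  have hb2 : (wH c' <= wtE a b)%N by rewrite -(wH_tau c') -hcc wH_le_wtE'.
  have := leq_trans (md2 c' hc' c'n0) hb2.
  by rewrite leqNgt (leq_trans hlt (geq_minr _ _)).
Qed.
End Main.
End Trace.

Unset Implicit Arguments.

Theorem corollary2p3 (p e s n : nat) (F : finFieldType)
  (C1 C2 : {vspace 'rV[F]_n}) (k1 k2 d1 d2 : nat) :
  prime p -> (0 < e)%N -> #|F| = (p ^ e)%N -> (s < e)%N ->
  \dim C1 = k1 -> is_min_dist C1 d1 ->
  \dim C2 = k2 -> is_min_dist C2 d2 ->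
  (forall x, x \in sdual p s C2 -> x \in C1) ->
  let D := pow_code C2 (p ^ (e - s)) in
  let S : pred 'rV[F]_n :=
    [pred c | ((c \in C1) && (c \notin edual D)) ||
              ((c \in D) && (c \notin edual (fun x => x \in C1)))] in
  exists Q : {vspace Vn F n},
    (forall d, is_min_wt S d -> qcode p e Q (k1 + k2 - n) d) /\
    (\dim Q = (#|F| ^ (k1 + k2 - n))%N) /\
    (forall d, is_min_wt S d -> (minn d1 d2 <= d)%N) /\
    pure_to p e Q (minn d1 d2).
Proof.
move=> pr e0 cF se h1 h2 h3 h4 h5.
exact: (@main_res F p e pr e0 cF s n C1 C2 se h5 k1 k2 d1 d2 h1 h2 h3 h4).
Qed.
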